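(* Consider the D2EAL algorithm (without periodic reset) described in the context with horizon $T\ge1$ and $\eta_\alpha,\eta_w>0$. Assume (Assumption 2) that $|l(x_1,y)-l(x_2,y)|\le L_1\|x_1-x_2\|$ for all $x_1,x_2\in\mathcal A$, $y\in\mathcal Y$, for some constant $L_1\ge0$; and (Assumption 3) that there are nonnegative numbers $\delta_1,\dots,\delta_T$ with $\|f_{t,i}-f_{t,j}\|\le\delta_t$ for all $i,j\in[N]$ and $t=1,\dots,T$. Let $\Delta_o\ge\sum_{t=1}^T\delta_t$ and let $i^*\in\arg\min_{j\in[N]}L_{T,j}$. Then for every $i\in[N]$, $$R_i^{GI}(T):=\bar L_{T,i}-L_{T,i^*}\le\frac{\eta_\alpha T}{8}+\frac{\log2}{\eta_\alpha}+L_1\Delta_o.$$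
   Context: Setup. There are $N\ge 1$ agents indexed by $i\in[N]$ and a horizon $T\ge1$. The outcome space $\mathcal Y$ and action space $\mathcal A$ are convex subsets of $\mathbb R^n$, $\|\cdot\|$ is the Euclidean norm. The loss $l:\mathcal A\times\mathcal Y\to[0,1]$ is convex in its first argument. The target sequence $y_1,\dots,y_T\in\mathcal Y$ is arbitrary. For each agent $i$ and each $t\ge1$, an ''expert'' supplies an arbitrary prediction $f_{t,i}\in\mathcal A$ of $y_t$ (available at time $t-1$). Agents communicate over a time-varying undirected graph; $\Omega_i(t)$ is the set of neighbours of agent $i$ at time $t$, $\Lambda_i(t):=\Omega_i(t)\cup\{i\}$ and $d_i(t):=|\Lambda_i(t)|$. D2EAL (without periodic reset). Initialize $\hat f_{0,i}=f_{1,i}$, $\hat\alpha_i(0)=\hat\alpha'_i(0)=\hat w_{ii}(0)=1$ for all $i$. For $t=0,1,\dots,T-1$, each agent $i$ computes: $\alpha_i(t)=\hat\alpha_i(t)/(\hat\alpha_i(t)+\hat\alpha'_i(t))$; individual prediction $\bar f_{t+1,i}=\alpha_i(t)f_{t+1,i}+(1-\alpha_i(t))\hat f_{t,i}$; social weights $w_{ij}(t)=\hat w_{jj}(t)/\sum_{j'\in\Lambda_i(t)}\hat w_{j'j'}(t)$ for $j\in\Lambda_i(t)$ and $w_{ij}(t)=0$ otherwise; social prediction $\hat f_{t+1,i}=\sum_{j\in\Lambda_i(t)}w_{ij}(t)\bar f_{t+1,j}$. After $y_{t+1}$ is revealed, define the losses $l_{t+1,i}=l(f_{t+1,i},y_{t+1})$,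 $\hat l^-_{t+1,i}=l(\hat f_{t,i},y_{t+1})$, $\bar l_{t+1,i}=l(\bar f_{t+1,i},y_{t+1})$, $\hat l_{t+1,i}=l(\hat f_{t+1,i},y_{t+1})$, and update $\hat\alpha_i(t+1)=\hat\alpha_i(t)e^{-\eta_\alpha l_{t+1,i}}$, $\hat\alpha'_i(t+1)=\hat\alpha'_i(t)e^{-\eta_\alpha \hat l^-_{t+1,i}}$, $\hat w_{ii}(t+1)=\hat w_{ii}(t)e^{-\eta_w\bar l_{t+1,i}}$. Cumulative losses: $L_{T,i}=\sum_{t=1}^T l_{t,i}$, $\hat L^-_{T,i}=\sum_{t=1}^T\hat l^-_{t,i}$, $\bar L_{T,i}=\sum_{t=1}^T\bar l_{t,i}$, $\hat L_{T,i}=\sum_{t=1}^T\hat l_{t,i}$. *)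

(* Defs.v *)
From HB Require Import structures.
From mathcomp Require Import all_boot all_order all_algebra.
From mathcomp Require Import reals.
From mathcomp Require Import sequences.
From mathcomp.analysis Require Import exp.
Set Implicit Arguments. Unset Strict Implicit. Unset Printing Implicit Defensive.
Import Order.TTheory GRing.Theory Num.Theory.
Local Open Scope ring_scope.

Section D2EAL.
Variable R : realType.
Variable n N : nat.

Definition enorm (x : 'rV[R]_n) : R := Num.sqrt (\sum_(k < n) x ord0 k ^+ 2).

Definition convex_set (A : 'rV[R]_n -> Prop) : Prop :=
  forall x z (lam : R), A x -> A z -> 0 <= lam <= 1 ->
    A (lam *: x + (1 - lam) *: z).

Definition convex_in_first (A Y : 'rV[R]_n -> Prop)
  (l : 'rV[R]_n -> 'rV[R]_n -> R) : Prop :=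
  forall x z y (lam : R), A x -> A z -> Y y -> 0 <= lam <= 1 ->
    l (lam *: x + (1 - lam) *: z) y <= lam * l x y + (1 - lam) * l z y.

Variable l : 'rV[R]_n -> 'rV[R]_n -> R.      (* loss l(action, outcome) *)
Variable f : nat -> 'I_N -> 'rV[R]_n.         (* expert predictions f_{t,i}, t >= 1 *)
Variable y : nat -> 'rV[R]_n.                 (* targets y_t, t >= 1 *)
Variable adj : nat -> 'I_N -> 'I_N -> bool.   (* j \in Omega_i(t) iff adj t i j *)
Variables eta_a eta_w : R.

Definition inLambda (t : nat) (i j : 'I_N) : bool := (j == i) || adj t i j.

(* state at time t: (hat alpha_i(t), hat alpha'_i(t), hat w_ii(t), hat f_{t,i}) *)
Definition state := (('I_N -> R) * ('I_N -> R) * ('I_N -> R) * ('I_N -> 'rV[R]_n))%type.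

Definition alpha_of (s : state) (i : 'I_N) : R :=
  let: (ha, ha', _, _) := s in ha i / (ha i + ha' i).

(* individual prediction bar f_{t+1,i} computed from the state at time t *)
Definition fbar_of (t : nat) (s : state) (i : 'I_N) : 'rV[R]_n :=
  let: (_, _, _, hf) := s in
  alpha_of s i *: f t.+1 i + (1 - alpha_of s i) *: hf i.

Definition w_of (t : nat) (s : state) (i j : 'I_N) : R :=
  let: (_, _, hw, _) := s in
  if inLambda t i j then hw j / (\sum_(j' | inLambda t i j') hw j') else 0.

Definition step (t : nat) (s : state) : state :=
  let: (ha, ha', hw, hf) := s in
  (fun i => ha i * expR (- (eta_a * l (f t.+1 i) (y t.+1))),
   fun i => ha' i * expR (- (eta_a * l (hf i) (y t.+1))),
   fun i => hw i * expR (- (eta_w * l (fbar_of t s i) (y t.+1))),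
   fun i => \sum_(j | inLambda t i j) w_of t s i j *: fbar_of t s j).

Fixpoint state_at (t : nat) : state :=
  match t with
  | 0 => (fun _ => 1, fun _ => 1, fun _ => 1, fun i => f 1 i)
  | t'.+1 => step t' (state_at t')
  end.

(* bar f_{t,i} for t >= 1 *)
Definition fbar (t : nat) (i : 'I_N) : 'rV[R]_n := fbar_of t.-1 (state_at t.-1) i.

Definition fhat (t : nat) (i : 'I_N) : 'rV[R]_n := (state_at t).2 i.

Definition Lcum (T : nat) (i : 'I_N) : R := \sum_(1 <= t < T.+1) l (f t i) (y t).
Definition Lbar (T : nat) (i : 'I_N) : R := \sum_(1 <= t < T.+1) l (fbar t i) (y t).

End D2EAL.

(* Main.v *)
Require Import Defs.
From HB Require Import structures.
From mathcomp Require Import all_boot all_order all_algebra.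
From mathcomp Require Import reals.
From mathcomp Require Import sequences.
From mathcomp.analysis Require Import exp.
From mathcomp Require Import boolp classical_sets topology normedtype derive realfun.
From mathcomp Require Import ring lra.
Import numFieldNormedType.Exports.
Import Order.TTheory GRing.Theory Num.Theory.
Local Open Scope ring_scope.

Lemma is_derive_lin {R : realType} (c x : R) : is_derive x 1 (fun s : R => c * s) c.
Proof.
have := @is_deriveZ R R R id c x 1 1 (is_derive_id x 1).
move=> H; apply: is_derive_eq H _; exact: mulr1.
Qed.

Lemma is_derive_expl {R : realType} (c x : R) : is_derive x 1 (fun s => expR (c * s)) (expR (c * x) * c).
Proof.
apply: (is_derive1_comp (f:=expR) (g:=fun s=>c*s)). exact: is_derive_lin.
Qed.

Lemma is_derive_M {R : realType} (a c1 b c2 x : R) :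
  is_derive x 1 (fun s => a * expR (c1 * s) + b * expR (c2 * s))
    (a * (expR (c1 * x) * c1) + b * (expR (c2 * x) * c2)).
Proof.
have h1 := is_deriveZ a (is_derive_expl c1 x).
have h2 := is_deriveZ b (is_derive_expl c2 x).
exact: (is_deriveD h1 h2).
Qed.


Lemma hoeff_k {R : realType} (al u v : R) : 0 <= al <= 1 -> 0 <= u <= 1 -> 0 <= v <= 1 ->
  forall s, 0 <= s ->
  0 <= (al * u * expR (-u * s) + (1 - al) * v * expR (-v * s)) *
       (al * expR (-u * s) + (1 - al) * expR (-v * s))^-1 + 4^-1 * s
       - (al * u + (1 - al) * v).
Proof.
move=> /andP[al0 al1] /andP[u0 u1] /andP[v0 v1].
set be := 1 - al.
have be0 : 0 <= be by rewrite /be subr_ge0.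
pose M := fun s => al * expR (-u * s) + be * expR (-v * s).
pose P := fun s => al * u * expR (-u * s) + be * v * expR (-v * s).
pose k := fun s => P s * (M s)^-1 + 4^-1 * s - (al * u + be * v).
have Mpos : forall s, 0 < M s.
  move=> s; rewrite /M.
  have ea := expR_gt0 (-u * s); have eb := expR_gt0 (-v * s).
  case: (ltrP 0 al) => ha.
    by apply: ltr_pwDl; [exact: mulr_gt0|apply: mulr_ge0 => //; exact: ltW].
  have bp : 0 < be by rewrite /be; lra.
  have -> : al = 0 by apply/eqP; rewrite eq_le ha al0.
  by rewrite mul0r add0r mulr_gt0.
have dk : forall x : R, is_derive x 1 k
   ((P x * (- (M x) ^- 2 *: (al * (expR (-u * x) * -u) + be * (expR (-v * x) * -v)))
    + (M x)^-1 * (al * u * (expR (-u * x) * -u) + be * v * (expR (-v * x) * -v)))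
    + 4^-1 - 0).
  move=> x.
  have hM := is_derive_M al (-u) be (-v) x.
  have hP := is_derive_M (al * u) (-u) (be * v) (-v) x.
  have hMi := is_deriveV (lt0r_neq0 (Mpos x)) hM.
  have hPM := is_deriveM hP hMi.
  have hl := is_derive_lin 4^-1 x.
  have hc := is_derive_cst (al * u + be * v) x 1.
  have := (is_deriveB (is_deriveD hPM hl) hc). move=> H; exact: H.
have k0 : k 0 = 0.
  rewrite /k /P /M !mulr0 expR0 !mulr1 /be.
  by rewrite [al + _]addrC subrK invr1 mulr1 addr0 subrr.
have kder : forall x : R, 0 <= (k^`())%classic x.
  move=> x; rewrite derive1E (@derive_val _ _ _ _ _ _ _ (dk x)) /=.
  have Mx := Mpos x; rewrite -/(M x).
  set a := expR (-u * x); set b := expR (-v * x).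
  have a0 : 0 < a by exact: expR_gt0.
  have b0 : 0 < b by exact: expR_gt0.
  have eM : M x = al * a + be * b by [].
  have eP : P x = al * u * a + be * v * b by [].
  rewrite eP eM in Mx *.
  set MM := al * a + be * b in Mx *.
  have key : 4 * (al * be * a * b * (u - v) ^+ 2) <= MM ^+ 2.
    have h1 : 0 <= al * be * a * b * (1 - (u - v) ^+ 2).
      apply: mulr_ge0; first by do 3! (apply: mulr_ge0 => //; try exact: ltW).
      rewrite subr_ge0; nra.
    have h2 := sqr_ge0 (al * a - be * b).
    rewrite /MM; nra.
  rewrite [X in 0 <= X](_ : _ = (MM ^+ 2 - 4 * (al * be * a * b * (u - v) ^+ 2)) / (4 * MM ^+ 2)); last first.
    rewrite /MM. have e : forall z w : R, z *: w = z * w by []. rewrite e. field. exact: lt0r_neq0 Mx.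
  apply: divr_ge0; first by rewrite subr_ge0.
  by apply: mulr_ge0 => //; apply: exprn_ge0; exact: ltW.
move=> s s0.
have D1 : forall x : R, x \in `]0, +oo[%R -> derivable k x 1.
  by move=> x _; have [] := dk x.
have C : {within `[0, +oo[%classic, continuous k}%classic.
  by apply: derivable_within_continuous => x _; have [] := dk x.
have := @ger0_derive1_ndecry R k 0 D1 (fun x _ => kder x) C 0 s (lexx 0) s0.
by rewrite k0.
Qed.

Lemma hoeffding {R : realType} (al u v eta : R) : 0 <= al <= 1 -> 0 <= u <= 1 -> 0 <= v <= 1 ->
  0 <= eta ->
  al * expR (- (eta * u)) + (1 - al) * expR (- (eta * v)) <=
  expR (- (eta * (al * u + (1 - al) * v)) + eta ^+ 2 / 8).
Proof.
move=> hal hu hv eta0.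
have hk := @hoeff_k R al u v hal hu hv.
move: hal hu hv => /andP[al0 al1] /andP[u0 u1] /andP[v0 v1].
set be := 1 - al in hk *.
have be0 : 0 <= be by rewrite /be subr_ge0.
set m := al * u + be * v in hk *.
pose g := fun s : R => m * s + (- 8^-1) * (s * s).
pose G := fun s : R => (al * expR (-u * s) + be * expR (-v * s)) * expR (g s).
have dg : forall x : R, is_derive x 1 g (m + - 8^-1 * (x *: 1 + x *: 1)).
  move=> x.
  have h1 := is_derive_lin m x.
  have h2 := is_deriveZ (- 8^-1) (is_deriveM (is_derive_id x 1) (is_derive_id x 1)).
  exact: (is_deriveD h1 h2).
have dG : forall x : R, is_derive x 1 G
   ((al * expR (-u * x) + be * expR (-v * x)) *: (expR (g x) * (m + - 8^-1 * (x *: 1 + x *: 1)))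
    + expR (g x) *: (al * (expR (- u * x) * - u) + be * (expR (- v * x) * - v))).
  move=> x.
  have hM := is_derive_M al (-u) be (-v) x.
  have hE := is_derive1_comp (is_derive_expR (g x)) (dg x).
  exact: (is_deriveM hM hE).
have Gder : forall x : R, 0 <= x -> (G^`())%classic x <= 0.
  move=> x x0; rewrite derive1E (@derive_val _ _ _ _ _ _ _ (dG x)) /=.
  have := hk x x0.
  set a := expR (-u * x); set b := expR (-v * x); set E := expR (g x).
  have E0 : 0 < E by exact: expR_gt0.
  have a0 : 0 < a by exact: expR_gt0.
  have b0 : 0 < b by exact: expR_gt0.
  have Mx : 0 < al * a + be * b.
    case: (ltrP 0 al) => ha.
      have h1 : 0 < al * a by exact: mulr_gt0.
      have h2 : 0 <= be * b by apply: mulr_ge0 => //; exact: ltW.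
      lra.
    have bp : 0 < be by rewrite /be; lra.
    have -> : al = 0 by apply/eqP; rewrite eq_le ha al0.
    by rewrite mul0r add0r mulr_gt0.
  set MM := al * a + be * b.
  move=> hkx.
  have e : forall z w : R, z *: w = z * w by [].
  rewrite !e.
  rewrite [X in X <= 0](_ : _ = - (E * MM) * ((al * u * a + be * v * b) / MM + 4^-1 * x - m)); last first.
    rewrite /MM /m; field; exact: lt0r_neq0 Mx.
  rewrite mulNr oppr_le0; apply: mulr_ge0 => //; apply: mulr_ge0; exact: ltW.
have D1 : forall x : R, x \in `]0, +oo[%R -> derivable G x 1.
  by move=> x _; have [] := dG x.
have C : {within `[0, +oo[%classic, continuous G}%classic.
  by apply: derivable_within_continuous => x _; have [] := dG x.
have H := @ler0_derive1_nincry R G 0 D1.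
have Gder' : forall x : R, x \in `]0, +oo[%R -> (G^`())%classic x <= 0.
  by move=> x; rewrite in_itv /= andbT => /ltW; exact: Gder.
have := H Gder' C 0 eta (lexx 0) eta0.
have G0 : G 0 = 1.
  rewrite /G /g !mulr0 expR0 !mulr1 add0r /be.
  by rewrite expR0 mulr1 [al + _]addrC subrK.
rewrite G0 /G => HG.
have -> : - (eta * u) = - u * eta by rewrite mulNr mulrC.
have -> : - (eta * v) = - v * eta by rewrite mulNr mulrC.
have -> : - (eta * m) + eta ^+ 2 / 8 = - g eta by rewrite /g; field.
have E0 := expR_gt0 (g eta).
rewrite expRN -(ler_pM2r E0) mulVf; [exact: HG | exact: lt0r_neq0 E0].
Qed.

Lemma convex_comb {R : realType} {n : nat} (A : 'rV[R]_n -> Prop) (I : Type)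
  (s : seq I) (w : I -> R) (x : I -> 'rV[R]_n) :
  convex_set A -> (forall i, 0 < w i) -> (forall i, A (x i)) -> (0 < size s)%N ->
  A (\sum_(i <- s) (w i / \sum_(j <- s) w j) *: x i).
Proof.
move=> hA wp hx.
elim: s => [//|a s IH] _.
case: s IH => [|b s'] IH.
  by rewrite !big_cons !big_nil !addr0 divff ?scale1r //; exact: lt0r_neq0.
have Spos : forall r : seq I, 0 <= \sum_(j <- r) w j.
  by move=> r; apply: sumr_ge0 => j _; exact: ltW.
set S := \sum_(j <- b :: s') w j.
have S0 : 0 < S by rewrite /S big_cons; apply: ltr_pwDl => //.
set W := \sum_(j <- a :: b :: s') w j.
have eW : W = w a + S by rewrite /W big_cons.
have W0 : 0 < W by rewrite eW; apply: addr_gt0.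
rewrite big_cons.
have -> : \sum_(i <- b :: s') (w i / W) *: x i =
          (1 - w a / W) *: \sum_(i <- b :: s') (w i / S) *: x i.
  rewrite scaler_sumr; apply: eq_bigr => i _; rewrite scalerA; congr (_ *: _).
  rewrite eW; field.
  by apply/andP; split; apply: lt0r_neq0 => //; rewrite -eW.
apply: hA => //; first exact: IH.
apply/andP; split; first by apply: divr_ge0 => //; exact: ltW.
by rewrite ler_pdivrMr // mul1r eW lerDl; exact: ltW.
Qed.

Theorem theorem1 (R : realType) (n N : nat)
  (A Y : 'rV[R]_n -> Prop)
  (l : 'rV[R]_n -> 'rV[R]_n -> R)
  (f : nat -> 'I_N -> 'rV[R]_n) (y : nat -> 'rV[R]_n)
  (adj : nat -> 'I_N -> 'I_N -> bool)
  (eta_a eta_w L1 Delta_o : R) (delta : nat -> R) (T : nat) (istar : 'I_N) :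
  (0 < T)%N ->
  0 < eta_a -> 0 < eta_w ->
  convex_set A -> convex_set Y ->
  (forall t i, (0 < t)%N -> A (f t i)) ->
  (forall t, (0 < t)%N -> Y (y t)) ->
  (forall t i j, adj t i j = adj t j i) ->
  (forall a b, A a -> Y b -> 0 <= l a b <= 1) ->
  convex_in_first A Y l ->
  (* Assumption 2 *)
  0 <= L1 ->
  (forall x1 x2 b, A x1 -> A x2 -> Y b ->
     `|l x1 b - l x2 b| <= L1 * enorm (x1 - x2)) ->
  (* Assumption 3 *)
  (forall t, 0 <= delta t) ->
  (forall t i j, (1 <= t <= T)%N -> enorm (f t i - f t j) <= delta t) ->
  \sum_(1 <= t < T.+1) delta t <= Delta_o ->
  (forall j, Lcum l f y T istar <= Lcum l f y T j) ->
  forall i : 'I_N,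
    Lbar l f y adj eta_a eta_w T i - Lcum l f y T istar
      <= eta_a * T%:R / 8 + ln 2 / eta_a + L1 * Delta_o.
Proof.
move=> T0 ea0 ew0 hA hY hfA hyY _ hl hconv L10 hlip hd0 hd hD _ i.
pose st := state_at l f y adj eta_a eta_w.
pose HA := fun t j => (st t).1.1.1 j.
pose HA' := fun t j => (st t).1.1.2 j.
pose HW := fun t j => (st t).1.2 j.
pose HF := fun t j => (st t).2 j.
pose al := fun t j => HA t j / (HA t j + HA' t j).
pose FB := fun t j => al t j *: f t.+1 j + (1 - al t j) *: HF t j.
have eFB : forall t j, fbar_of f t (st t) j = FB t j.
  by move=> t j; rewrite /FB /al /HA /HA' /HF /fbar_of /alpha_of; case: (st t) => [[[? ?] ?] ?].
have eHA : forall t j, HA t.+1 j = HA t j * expR (- (eta_a * l (f t.+1 j) (y t.+1))).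
  by move=> t j; rewrite /HA /= /step; case: (st t) => [[[? ?] ?] ?].
have eHA' : forall t j, HA' t.+1 j = HA' t j * expR (- (eta_a * l (HF t j) (y t.+1))).
  by move=> t j; rewrite /HA' /HF /= /step; case: (st t) => [[[? ?] ?] ?].
have eHW : forall t j, HW t.+1 j = HW t j * expR (- (eta_w * l (FB t j) (y t.+1))).
  by move=> t j; rewrite /HW /= /step -eFB; case: (st t) => [[[? ?] ?] ?].
have eHF : forall t j, HF t.+1 j =
   \sum_(k | inLambda adj t j k) (HW t k / \sum_(k' | inLambda adj t j k') HW t k') *: FB t k.
  move=> t j; rewrite /HF /= /step.
  under [in RHS]eq_bigr do rewrite -eFB.
  rewrite /HW; case: (st t) => [[[? ?] ?] ?] /=.
  by apply: eq_bigr => k ->; rewrite /w_of.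
have inv : forall t, (forall j, 0 < HA t j) /\ (forall j, 0 < HA' t j) /\
    (forall j, 0 < HW t j) /\ (forall j, A (HF t j)).
  elim=> [|t [p1 [p2 [p3 p4]]]].
    split; first by move=> j; exact: ltr01.
    split; first by move=> j; exact: ltr01.
    split; first by move=> j; exact: ltr01.
    by move=> j; exact: hfA.
  split; first by move=> j; rewrite eHA; apply: mulr_gt0 => //; exact: expR_gt0.
  split; first by move=> j; rewrite eHA'; apply: mulr_gt0 => //; exact: expR_gt0.
  split; first by move=> j; rewrite eHW; apply: mulr_gt0 => //; exact: expR_gt0.
  move=> j; rewrite eHF -big_filter.
  under eq_bigr do rewrite -big_filter.
  apply: convex_comb => //.
    move=> k; rewrite /FB; apply: hA; [exact: hfA | exact: p4 |].
    have a1 := p1 k; have a2 := p2 k.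
    apply/andP; split; first by apply: divr_ge0; apply: ltW => //; exact: addr_gt0.
    by rewrite ler_pdivrMr ?mul1r ?lerDl; [exact: ltW | exact: addr_gt0].
  have : j \in [seq x <- index_enum 'I_N | inLambda adj t j x].
    by rewrite mem_filter /inLambda eqxx mem_index_enum.
  by case: [seq x <- _ | _].
have alI : forall t j, 0 <= al t j <= 1.
  move=> t j; have [a1 [a2 _]] := inv t; have h1 := a1 j; have h2 := a2 j.
  apply/andP; split; first by apply: divr_ge0; apply: ltW => //; exact: addr_gt0.
  by rewrite ler_pdivrMr ?mul1r ?lerDl; [exact: ltW | exact: addr_gt0].
have FBA : forall t j, A (FB t j).
  move=> t j; have [_ [_ [_ p4]]] := inv t.
  by apply: hA; [exact: hfA | exact: p4 | exact: alI].
have Lsucc : forall t, Lcum l f y t.+1 i = Lcum l f y t i + l (f t.+1 i) (y t.+1).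
  by move=> t; rewrite /Lcum big_nat_recr.
have Bsucc : forall t, Lbar l f y adj eta_a eta_w t.+1 i =
    Lbar l f y adj eta_a eta_w t i + l (FB t i) (y t.+1).
  by move=> t; rewrite /Lbar big_nat_recr //= -eFB.
have eHAL : forall t, HA t i = expR (- (eta_a * Lcum l f y t i)).
  elim=> [|t IH]; first by rewrite /Lcum big_geq // mulr0 oppr0 expR0.
  by rewrite eHA IH Lsucc -expRD mulrDr opprD.
have Wb : forall t, HA t i + HA' t i <=
    2 * expR (- (eta_a * Lbar l f y adj eta_a eta_w t i) + t%:R * (eta_a ^+ 2 / 8)).
  elim=> [|t IH].
    rewrite /Lbar big_geq // mulr0 oppr0 mul0r addr0 expR0 mulr1.
    rewrite /HA /HA' /=; lra.
  have [p1 [p2 [_ p4]]] := inv t.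
  have Wp : 0 < HA t i + HA' t i by apply: addr_gt0.
  have uI := hl _ _ (hfA t.+1 i erefl) (hyY t.+1 erefl).
  have vI := hl _ _ (p4 i) (hyY t.+1 erefl).
  have h1 : HA t.+1 i + HA' t.+1 i = (HA t i + HA' t i) *
     (al t i * expR (- (eta_a * l (f t.+1 i) (y t.+1))) +
      (1 - al t i) * expR (- (eta_a * l (HF t i) (y t.+1)))).
    rewrite eHA eHA' /al; field; exact: lt0r_neq0.
  have h2 := @hoeffding R _ _ _ eta_a (alI t i) uI vI (ltW ea0).
  have hc : l (FB t i) (y t.+1) <= al t i * l (f t.+1 i) (y t.+1) + (1 - al t i) * l (HF t i) (y t.+1).
    by apply: hconv; [exact: hfA | exact: p4 | exact: hyY | exact: alI].
  have h3 : expR (- (eta_a * (al t i * l (f t.+1 i) (y t.+1) + (1 - al t i) * l (HF t i) (y t.+1)))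
      + eta_a ^+ 2 / 8) <= expR (- (eta_a * l (FB t i) (y t.+1)) + eta_a ^+ 2 / 8).
    by rewrite ler_expR lerD2r lerN2 ler_pM2l.
  rewrite h1 Bsucc -natr1.
  have E1 := expR_gt0 (- (eta_a * l (FB t i) (y t.+1)) + eta_a ^+ 2 / 8).
  apply: le_trans (_ : (HA t i + HA' t i) * expR (- (eta_a * l (FB t i) (y t.+1)) + eta_a ^+ 2 / 8) <= _).
    by rewrite ler_pM2l //; exact: le_trans h2 h3.
  apply: le_trans (_ : 2 * expR (- (eta_a * Lbar l f y adj eta_a eta_w t i) + t%:R * (eta_a ^+ 2 / 8)) *
      expR (- (eta_a * l (FB t i) (y t.+1)) + eta_a ^+ 2 / 8) <= _).
    by rewrite ler_pM2r.
  rewrite -mulrA -expRD le_eqVlt; apply/orP; left; apply/eqP; congr (_ * expR _).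
  ring.
set Lb := Lbar l f y adj eta_a eta_w T i.
set Lc := Lcum l f y T i.
set Ls := Lcum l f y T istar.
have lip : Lc - Ls <= L1 * Delta_o.
  rewrite /Lc /Ls /Lcum -sumrB.
  apply: le_trans (_ : \sum_(1 <= t < T.+1) L1 * delta t <= _).
    apply: ler_sum_nat => t /andP[t1 tT].
    have ht : (0 < t)%N by [].
    apply: le_trans (ler_norm _) _.
    apply: le_trans (hlip _ _ _ (hfA t i ht) (hfA t istar ht) (hyY t ht)) _.
    by apply: ler_wpM2l => //; apply: hd; rewrite t1.
  by rewrite -mulr_sumr; apply: ler_wpM2l.
have key : - (eta_a * Lc) <= ln 2 + (- (eta_a * Lb) + T%:R * (eta_a ^+ 2 / 8)).
  rewrite -ler_expR expRD lnK; last by rewrite posrE.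
  rewrite -eHAL; apply: le_trans (Wb T).
  have [_ [p2 _]] := inv T.
  by rewrite lerDl; exact: ltW.
have : Lb - Lc - eta_a * T%:R / 8 <= ln 2 / eta_a.
  rewrite ler_pdivlMr //; nra.
lra.
Qed.
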